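(* Let $d\in\mathbb Z_{>0}$ and $s\in\{-1,1\}$. Then there exist infinitely many positive integers $n$ of the special form such that $\Phi_n(T)\equiv 1+sT^d \pmod{T^{2d}}$ in $\mathbb Z[T]$.
   Context: $\Phi_n(T)\in\mathbb Z[T]$ denotes the $n$-th cyclotomic polynomial (the monic minimal polynomial over $\mathbb Q$ of a primitive $n$-th root of unity). A positive integer $n$ is of the special form if $n=pm$ where $p$ is a prime number and $m$ is a positive integer dividing $p-1$. *)

(* Defs.v *)
From HB Require Import structures.
From mathcomp Require Import all_boot all_order all_algebra all_field.
Set Implicit Arguments. Unset Strict Implicit. Unset Printing Implicit Defensive.
Import GRing.Theory.

Definition special_form (n : nat) : Prop :=
  exists p m : nat, [/\ prime p, (0 < m)%N, (m %| p.-1)%N & n = (p * m)%N].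

(* Main.v *)
Require Import Defs.
From HB Require Import structures.
From mathcomp Require Import all_boot all_order all_algebra all_field.
From mathcomp Require Import zify.
Import GRing.Theory.
Local Open Scope ring_scope.

Lemma divisors_qm (q m : nat) : prime q -> (0 < m)%N ->
  perm_eq (divisors (q * m))
    ([seq (q * e)%N | e <- divisors m] ++ [seq e <- divisors m | ~~ (q %| e)%N]).
Proof.
move=> pq m0; have q0 := prime_gt0 pq.
have qm0 : (0 < q * m)%N by rewrite muln_gt0 q0.
apply: uniq_perm; first exact: divisors_uniq.
  rewrite cat_uniq map_inj_uniq ?divisors_uniq; last by move=> x y /eqP; rewrite eqn_pmul2l // => /eqP.
  rewrite filter_uniq ?divisors_uniq // andbT /=.
  apply/hasPn => e; rewrite mem_filter => /andP[qe _].
  apply/mapP => [[f _ ef]]; by rewrite ef dvdn_mulr in qe.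
move=> f; rewrite mem_cat mem_filter -!dvdn_divisors //.
apply/idP/idP.
  move=> fd; case: (boolP (q %| f)%N) => qf.
    apply/orP; left; apply/mapP; exists (f %/ q)%N; last by rewrite mulnC divnK.
    by rewrite -dvdn_divisors // -(dvdn_pmul2r q0) divnK // mulnC.
  have cfq : coprime f q by rewrite coprime_sym prime_coprime.
  by apply/orP; right; rewrite -(Gauss_dvdr m cfq).
case/orP.
  by case/mapP => e; rewrite -dvdn_divisors // => ed ->; rewrite dvdn_pmul2l.
by case/andP => _ fm; rewrite dvdn_mull.
Qed.

Lemma Phi_comp_Xp (q : nat) : prime q -> forall m, (0 < m)%N ->
  'Phi_m \Po 'X^q = 'Phi_(q * m) * (if (q %| m)%N then 1 else 'Phi_m).
Proof.
move=> pq; have q0 := prime_gt0 pq.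
set g := fun e : nat => 'Phi_(q * e) * (if (q %| e)%N then 1 else 'Phi_e).
have key m : (0 < m)%N -> \prod_(e <- divisors m) ('Phi_e \Po 'X^q)
                         = \prod_(e <- divisors m) g e.
  move=> m0.
  rewrite -(big_morph (fun p => p \Po 'X^q) (fun x y => comp_polyM x y _) (comp_polyC 1 _)).
  rewrite prod_Cyclotomic // comp_polyB comp_Xn_poly comp_polyC -exprM.
  rewrite -prod_Cyclotomic ?muln_gt0 ?q0 // (perm_big _ (divisors_qm _ _ pq m0)).
  rewrite big_cat big_map /= big_filter /g big_split /=; congr (_ * _).
  by rewrite big_mkcond /=; apply: eq_bigr => e _; case: (q %| e)%N.
elim/ltn_ind => m IH m0.
have := key m m0; rewrite (big_rem m) ?(big_rem m (_ : m \in divisors m)) -?dvdn_divisors //.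
rewrite (eq_big_seq g); last first.
  move=> e; rewrite mem_rem_uniq ?divisors_uniq // inE => /andP[em].
  rewrite -dvdn_divisors // => ed; apply: IH; last by apply: dvdn_gt0 ed.
  by rewrite ltn_neqAle em dvdn_leq.
move/mulIf; apply.
rewrite prodf_seq_neq0; apply/allP => e _; rewrite /g; apply/implyP => _.
rewrite mulf_neq0 ?monic_neq0 ?Cyclotomic_monic //.
by case: ifP => _; rewrite ?monic1 ?Cyclotomic_monic.
Qed.

Definition cong k (f g : {poly int}) := forall i, (i < k)%N -> f`_i = g`_i.

Lemma cong_mul k f f' g g' : cong k f f' -> cong k g g' -> cong k (f * g) (f' * g').
Proof.
move=> hf hg i ik; rewrite !coefM; apply: eq_bigr => j _.
have ji : (j <= i)%N by rewrite -ltnS.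
rewrite hf ?hg //; [exact: leq_ltn_trans (leq_subr _ _) ik | exact: leq_ltn_trans ji ik].
Qed.

Lemma cong_comp k j f g : (0 < j)%N -> cong k f g -> cong (k * j) (f \Po 'X^j) (g \Po 'X^j).
Proof.
move=> j0 h i ik; rewrite !coef_comp_poly_Xn //; case: ifP => // ji.
by apply: h; rewrite ltn_divLR.
Qed.

Lemma cong_trans k f g h : cong k f g -> cong k g h -> cong k f h.
Proof. by move=> a b i ik; rewrite a ?b. Qed.

Lemma cong_sym k f g : cong k f g -> cong k g f.
Proof. by move=> a i ik; rewrite a. Qed.

Lemma cong_dvd k f g : cong k f g -> 'X^k %| f - g.
Proof.
move=> h; rewrite -(poly_take_drop k (f - g)).
have -> : take_poly k (f - g) = 0.
  apply/polyP => i; rewrite coef_take_poly coef0 coefB; case: ifP => // ik.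
  by rewrite h // subrr.
by rewrite add0r dvdp_mull.
Qed.

Lemma coefM0 (f g : {poly int}) : (f * g)`_0 = f`_0 * g`_0.
Proof. by rewrite coefM big_ord1. Qed.

Lemma coefM1 (f g : {poly int}) : (f * g)`_1 = f`_0 * g`_1 + f`_1 * g`_0.
Proof. by rewrite coefM big_ord_recr big_ord1. Qed.

Lemma Phi1 : 'Phi_1 = 'X - 1.
Proof. by rewrite -['X]expr1 -prod_Cyclotomic // [divisors 1]/= big_seq1. Qed.

Lemma Phi_prime_coef q : prime q -> 'Phi_q`_0 = 1 /\ 'Phi_q`_1 = 1.
Proof.
move=> pq; have := Phi_comp_Xp q pq 1 (ltn0Sn 0).
have q1' : (q != 1)%N by rewrite gtn_eqF ?prime_gt1.
rewrite dvdn1 (negPf q1') muln1 Phi1.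
rewrite comp_polyB comp_polyX comp_polyC => E.
have E0 : ('X^q - 1%:P : {poly int})`_0 = ('Phi_q * ('X - 1))`_0 by rewrite E.
have E1 : ('X^q - 1%:P : {poly int})`_1 = ('Phi_q * ('X - 1))`_1 by rewrite E.
move: E0 E1; rewrite coefM0 coefM1 !coefB !coefXn !coefX !coefC /=.
have q1 : (1 != q)%N by rewrite eq_sym gtn_eqF ?prime_gt1.
have q0 : (0%N == q) = false by rewrite eq_sym gtn_eqF ?prime_gt0.
rewrite (negPf q1) q0 /= !sub0r !subr0 !mulrN1 mulr1 => h0 h1.
have a0 : 'Phi_q`_0 = 1 by rewrite -[LHS]opprK -h0 opprK.
by split => //; move: h1; rewrite a0 => /eqP; rewrite eq_sym subr_eq0 => /eqP.
Qed.

Lemma Phi_step m q : (0 < m)%N -> 'Phi_m`_0 = 1 -> prime q -> ~~ (q %| m)%N ->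
  'Phi_(q * m)`_0 = 1 /\ 'Phi_(q * m)`_1 = - 'Phi_m`_1.
Proof.
move=> m0 c0 pq qm; have := Phi_comp_Xp q pq m m0; rewrite (negPf qm) => E.
have q0 := prime_gt0 pq.
have E0 : ('Phi_m \Po 'X^q)`_0 = ('Phi_(q * m) * 'Phi_m)`_0 by rewrite E.
have E1 : ('Phi_m \Po 'X^q)`_1 = ('Phi_(q * m) * 'Phi_m)`_1 by rewrite E.
move: E0 E1; rewrite coefM0 coefM1 !coef_comp_poly_Xn // dvdn0 div0n c0 mulr1.
rewrite dvdn1 gtn_eqF ?prime_gt1 // => <-; rewrite mul1r mulr1 => /eqP.
by rewrite eq_sym addrC addr_eq0 => /eqP.
Qed.

Lemma prime_ndvd_prod q s : prime q -> all prime s -> q \notin s ->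
  ~~ (q %| \prod_(x <- s) x)%N.
Proof.
move=> pq; elim: s => [|x s IH] /=; first by rewrite big_nil dvdn1 gtn_eqF ?prime_gt1.
case/andP => px ps; rewrite inE negb_or => /andP[qx qs].
by rewrite big_cons Euclid_dvdM // negb_or IH // andbT dvdn_prime2 // qx.
Qed.

Lemma Phi_list s : uniq s -> all prime s -> s != [::] ->
  'Phi_(\prod_(x <- s) x)`_0 = 1 /\ 'Phi_(\prod_(x <- s) x)`_1 = (-1) ^+ (size s).+1.
Proof.
elim: s => [|q s IH] //= /andP[qs us] /andP[pq ps] _.
rewrite big_cons; case: (eqVneq s [::]) => [->|sn].
  by rewrite big_nil muln1 expr2 mulrN1 opprK; apply: Phi_prime_coef.
have [c0 c1] := IH us ps sn.
have m0 : (0 < \prod_(x <- s) x)%N.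
  by rewrite big_seq_cond prodn_cond_gt0 // => i /andP[/(allP ps) /prime_gt0].
have [d0 d1] := Phi_step _ q m0 c0 pq (prime_ndvd_prod q s pq ps qs).
by split => //; rewrite d1 c1 [in RHS]exprS mulN1r.
Qed.

Lemma PhiXk r : (0 < r)%N -> forall k, (0 < k)%N ->
  (forall q, prime q -> (q %| k)%N -> (q %| r)%N) -> 'Phi_(r * k) = 'Phi_r \Po 'X^k.
Proof.
move=> r0; elim/ltn_ind => k IH k0 hk.
case: (ltngtP k 1) => [|k1|->]; first by rewrite ltnNge k0.
  have pk := pdiv_prime k1; have dk := pdiv_dvd k.
  set q := pdiv k in pk dk *.
  have [k' Dk] : exists k', k = (k' * q)%N by exists (k %/ q)%N; rewrite divnK.
  have k'0 : (0 < k')%N by move: k0; rewrite Dk muln_gt0 => /andP[].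
  have k'k : (k' < k)%N by rewrite Dk -{1}(muln1 k') ltn_mul2l k'0 prime_gt1.
  have hk' : forall p, prime p -> (p %| k')%N -> (p %| r)%N.
    by move=> p pp pk'; apply: hk => //; rewrite Dk dvdn_mulr.
  have rk0 : (0 < r * k')%N by rewrite muln_gt0 r0.
  have := Phi_comp_Xp q pk (r * k') rk0.
  rewrite dvdn_mulr ?hk // mulr1 IH // => E.
  by rewrite Dk mulnA mulnC -E -comp_polyA comp_Xn_poly -exprM mulnC.
by rewrite muln1 comp_polyXr.
Qed.

Lemma Phi0_inv m : (0 < m)%N -> exists t : int, 'Phi_m`_0 * t = -1.
Proof.
move=> m0; have E : (\prod_(d <- divisors m) 'Phi_d).[0] = ('X^m - 1 : {poly int}).[0].
  by rewrite prod_Cyclotomic.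
move: E; rewrite horner_prod (big_rem m) -?dvdn_divisors // hornerD hornerN hornerXn.
rewrite expr0n gtn_eqF // hornerC sub0r horner_coef0 => E.
by exists (\prod_(y <- rem m (divisors m)) ('Phi_y).[0]).
Qed.

Lemma horner_split (P : {poly int}) x : exists w, P.[x] = P`_0 + w * x.
Proof.
exists (drop_poly 1 P).[x].
rewrite -{1}(poly_take_drop 1 P) (_ : take_poly 1 P = (P`_0)%:P).
  by rewrite hornerD hornerC hornerM expr1 hornerX.
by apply/polyP => i; rewrite coef_take_poly coefC; case: i.
Qed.

Lemma prime_1mod m N : (0 < m)%N -> exists p, [/\ prime p, (N < p)%N & (m %| p.-1)%N].
Proof.
move=> m0; set P := 'Phi_m.
have [t Ht] := Phi0_inv m m0.
set M := (m * N`! * 2)%N.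
have M0 : (0 < M)%N by rewrite !muln_gt0 m0 fact_gt0.
set Q := P * P - 1.
have sP : (1 < size P)%N by rewrite size_Cyclotomic ltnS totient_gt0.
have P0 : P != 0 by rewrite -size_poly_eq0 -lt0n (ltn_trans _ sP).
have Q0 : Q != 0.
  rewrite subr_eq0; apply/negP => /eqP E.
  have : size (P * P) = size (1 : {poly int}) by rewrite E.
  by rewrite size_mul // size_poly1; move: sP; set k := size P; lia.
set rs := [seq ((M * i.+1)%N)%:Z | i <- iota 0 (size Q)].
have urs : uniq rs.
  by rewrite map_inj_uniq ?iota_uniq // => i j /eqP; rewrite eqz_nat eqn_pmul2l // => /eqP [].
have : ~~ all (root Q) rs.
  by apply/negP => H; have := max_poly_roots Q0 H urs; rewrite size_map size_iota ltnn.
case/allPn => x /mapP[i _ ->]; set a := (M * i.+1)%N => nroot.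
have a1 : (1 < a)%N.
  by have := fact_gt0 N; rewrite /a /M; move: (N`!) => f; nia.
set v := P.[a%:Z].
have [w Hv] := horner_split P a%:Z; rewrite -/v in Hv.
have vv : v * v != 1.
  by move: nroot; rewrite /root /Q hornerD hornerN hornerM hornerC subr_eq0.
set n := `|v|%N.
have n1 : (1 < n)%N.
  rewrite ltnNge leq_eqVlt ltnS leqn0; apply/negP => /orP[]/eqP Hn.
    move: vv; rewrite (intEsign v) -/n Hn.
    by case: (v < 0); rewrite /= ?expr0 ?expr1 ?mul1r ?mulr1 ?mulrNN.
  move/eqP: Hn; rewrite absz_eq0 => /eqP v0.
  have : (a%:Z) * (w * t) = 1.
    have c0 : P`_0 = - (w * a%:Z) by apply/eqP; rewrite -addr_eq0 -Hv v0.
    by move: Ht; rewrite -/P c0 mulNr => /eqP; rewrite eqr_opp -mulrA mulrCA => /eqP.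
  move/(congr1 absz); rewrite abszM /= => /eqP; rewrite muln_eq1 => /andP[/eqP a1' _].
  by rewrite a1' in a1.
have pq := pdiv_prime n1; have qn := pdiv_dvd n; set q := pdiv n in pq qn.
have chq := pchar_Fp pq.
have dvdF k : (q %| k)%N = (k%:R == 0 :> 'F_q) := dvdn_pcharf chq k.
have hv0 : (v%:~R : 'F_q) = 0.
  have n0 : (n%:R : 'F_q) = 0 by apply/eqP; rewrite -dvdF.
  by rewrite (intEsign v) intrM -/n -pmulrn n0 mulr0.
have qa : ~~ (q %| a)%N.
  rewrite dvdF; apply/negP => /eqP a0.
  have := congr1 (intr : int -> 'F_q) Hv.
  rewrite intrD intrM hv0 -pmulrn a0 mulr0 addr0 => /esym c0.
  have := congr1 (intr : int -> 'F_q) Ht.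
  by rewrite intrM c0 mul0r => /eqP; rewrite eq_sym oppr_eq0 oner_eq0.
have qN : (N < q)%N.
  rewrite ltnNge; apply/negP => qN; apply/negP: qa; apply/negPn.
  by rewrite /a /M dvdn_mulr // dvdn_mulr // dvdn_mull // dvdn_fact // prime_gt0.
have qm : ~~ (q %| m)%N.
  apply/negP => qm; apply/negP: qa; apply/negPn.
  by rewrite /a /M dvdn_mulr // dvdn_mulr // dvdn_mulr.
have mR : (m%:R : 'F_q) != 0 by rewrite -dvdF.
set al := ((a%:Z)%:~R : 'F_q).
have al0 : al != 0 by rewrite /al -pmulrn -dvdF.
pose PF e := map_poly (intr : int -> 'F_q) 'Phi_e.
have prodF k : (0 < k)%N -> \prod_(e <- divisors k) PF e = 'X^k - 1.
  move=> k0; have := congr1 (map_poly (intr : int -> 'F_q)) (prod_Cyclotomic k0).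
  by rewrite rmorph_prod rmorphB rmorph1 rmorphXn /= map_polyX.
have rootm : (PF m).[al] = 0 by rewrite /PF horner_map; exact: hv0.
have alm : al ^+ m = 1.
  have E : (\prod_(e <- divisors m) PF e).[al] = ('X^m - 1).[al] by rewrite prodF.
  move: E; rewrite horner_prod (bigD1_seq m) -?dvdn_divisors ?divisors_uniq //.
  rewrite [X in X = _]/= rootm mul0r.
  by rewrite hornerD hornerN hornerXn hornerC => /eqP; rewrite eq_sym subr_eq0 => /eqP.
have [k primk km] := prim_order_exists m0 alm.
have km' : k = m.
  apply/eqP; apply/negPn/negP => kn.
  have k0 := prim_order_gt0 primk.
  have alk := prim_expr_order primk.
  have E : (\prod_(e <- divisors k) PF e).[al] = 0.
    by rewrite prodF // hornerD hornerN hornerXn hornerC alk subrr.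
  move/eqP: E; rewrite horner_prod prodf_seq_eq0 => /hasP[e]; rewrite -dvdn_divisors // => ek /= re.
  have em : (e %| m)%N := dvdn_trans ek km.
  have ne : e != m.
    have km2 : (k < m)%N by rewrite ltn_neqAle kn dvdn_leq.
    by rewrite ltn_eqF // (leq_ltn_trans (dvdn_leq k0 ek) km2).
  have sep := separable_Xn_sub_1 mR.
  have eIn : e \in [seq i <- divisors m | i != m] by rewrite mem_filter ne -dvdn_divisors.
  have dv : PF m * PF e %| 'X^m - 1.
    rewrite -prodF // (bigD1_seq m) -?dvdn_divisors ?divisors_uniq // -big_filter.
    rewrite (bigD1_seq e eIn) ?filter_uniq ?divisors_uniq //.
    rewrite [X in _ %| X]/= mulrA.
    exact: dvdp_mulr.
  have cop := separable_coprime sep dv.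
  have rm : root (PF m) al by apply/rootP.
  by have := coprimep_root cop rm; rewrite re.
rewrite km' in primk.
exists q; split => //.
rewrite (prim_order_dvd primk).
have h : al * al ^+ q.-1 = al * 1.
  by rewrite mulr1 -exprS prednK ?prime_gt0 // -{2}(expf_card al) card_Fp.
by rewrite (mulfI al0 h).
Qed.

Lemma cong_refl k f : cong k f f.
Proof. by []. Qed.

Lemma sign_pick (s : int) (t : nat) : (s = 1 \/ s = -1) ->
  exists2 u : nat, (u == 1 \/ u == 2)%N & (-1) ^+ (t + u).+1 = - s.
Proof.
move=> hs.
have key u : (-1) ^+ (t + u).+1 = (-1) ^+ (~~ (odd t (+) odd u)) :> int.
  by rewrite -signr_odd oddS oddD.
case: hs => ->; case Ot: (odd t).
- by exists 1%N; [left | rewrite key Ot /= expr1].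
- by exists 2%N; [right | rewrite key Ot /= expr1].
- by exists 2%N; [right | rewrite key Ot /= expr0 opprK].
- by exists 1%N; [left | rewrite key Ot /= expr0 opprK].
Qed.

Theorem lemma7p2 (d : nat) (s : int) :
  (0 < d)%N -> (s = 1 \/ s = -1) ->
  forall N : nat, exists n : nat,
    [/\ (N < n)%N, special_form n &
        'X^(2 * d) %| 'Phi_n - (1 + s *: 'X^d)].
Proof.
move=> d0 hs N.
have [q1 [pq1 dq1 _]] := prime_1mod 1 d (ltn0Sn 0).
have [q2 [pq2 q12 _]] := prime_1mod 1 q1 (ltn0Sn 0).
set s0 := primes d.
have [u u12 hu] := sign_pick s (size s0) hs.
set L := s0 ++ (if u == 1%N then [:: q1] else [:: q1; q2]).
have sL : size L = (size s0 + u)%N.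
  by rewrite size_cat; case: u12 => /eqP ->.
have s0d x : x \in s0 -> (x <= d)%N.
  by rewrite mem_primes => /and3P[_ _ /dvdn_leq]; apply.
have notin0 x : (d < x)%N -> (x \in s0) = false.
  by move=> dx; apply/negP => /s0d; rewrite leqNgt dx.
have q2d : (d < q2)%N := ltn_trans dq1 q12.
have uL : uniq L.
  rewrite cat_uniq primes_uniq /=; case: ifP => _ /=; rewrite ?inE ?(notin0 q1) ?(notin0 q2) //=.
  by rewrite ltn_eqF.
have pL : all prime L.
  by rewrite all_cat all_prime_primes; case: ifP => _ /=; rewrite ?pq1 ?pq2.
have nL : L != [::].
  by rewrite -size_eq0 sL; case: u12 => /eqP ->; rewrite addnS.
set r := \prod_(x <- L) x.
have r0 : (0 < r)%N.
  by rewrite /r big_seq_cond prodn_cond_gt0 // => i /andP[/(allP pL) /prime_gt0].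
have [c0 c1] := Phi_list L uL pL nL; rewrite -/r sL hu in c1.
have hdr : forall q, prime q -> (q %| d)%N -> (q %| r)%N.
  move=> q pq qd; have qL : q \in L by rewrite mem_cat mem_primes pq d0 qd.
  by rewrite /r (bigD1_seq q qL uL) /= dvdn_mulr.
set m := (r * d)%N.
have m0 : (0 < m)%N by rewrite muln_gt0 r0.
have Em := PhiXk r r0 d d0 hdr; rewrite -/m in Em.
have cr : cong 2 'Phi_r (1 + (- s) *: 'X).
  move=> i; case: i => [|[|i]] // _; rewrite coefD coef1 coefZ coefX /=.
    by rewrite mulr0 addr0.
  by rewrite mulr1 add0r.
have cm : cong (2 * d) 'Phi_m (1 + (- s) *: 'X^d).
  rewrite Em -[X in cong _ _ X](_ : (1 + (- s) *: 'X) \Po 'X^d = _).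
    exact: cong_comp.
  by rewrite comp_polyD -polyC1 comp_polyC comp_polyZ comp_polyX.
have [p [pp pB pm]] := prime_1mod m (N + 2 * d + m) m0.
have pNm : ~~ (p %| m)%N.
  by apply/negP => /(dvdn_leq m0); rewrite leqNgt (leq_ltn_trans (leq_addl _ m) pB).
have Ep := Phi_comp_Xp p pp m m0; rewrite (negPf pNm) in Ep.
exists (p * m)%N; split.
- have Np : (N < p)%N by rewrite (leq_ltn_trans _ pB) // -addnA leq_addr.
  exact: leq_trans Np (leq_pmulr p m0).
- by exists p, m; split.
apply: cong_dvd.
have c2 : cong (2 * d) ('Phi_(p * m) * 'Phi_m) 1.
  rewrite -Ep => i id; rewrite coef_comp_poly_Xn ?prime_gt0 // coef1.
  case: (posnP i) => [->|i0].
    have cm0 : 'Phi_m`_0 = 1.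
      by rewrite cm ?muln_gt0 ?d0 // coefD coef1 coefZ coefXn [(0%N == d)]eq_sym (gtn_eqF d0) mulr0 addr0.
    by rewrite dvdn0 div0n cm0.
  have -> : (p %| i)%N = false.
    have dp : (2 * d < p)%N.
      by rewrite (leq_ltn_trans _ pB) // (leq_trans (leq_addl N (2 * d)) (leq_addr m _)).
    by apply/negP => /(dvdn_leq i0); rewrite leqNgt (ltn_trans id dp).
  by [].
have c3 : cong (2 * d) ('Phi_(p * m) * (1 + (- s) *: 'X^d)) 1.
  apply: cong_trans c2; apply: cong_mul; first exact: cong_refl.
  exact: cong_sym.
have c4 := cong_mul _ _ _ _ _ c3 (cong_refl (2 * d) (1 - (- s) *: 'X^d)).
rewrite mul1r -mulrA in c4.
have E2 : (1 + (- s) *: 'X^d) * (1 - (- s) *: 'X^d) = 1 - 'X^(2 * d) :> {poly int}.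
  rewrite mulrDl mul1r mulrBr mulr1 addrA subrK -scalerAl -scalerAr scalerA -exprD addnn -mul2n.
  by rewrite mulrNN; case: hs => ->; rewrite ?mulrNN mulr1 scale1r.
rewrite E2 in c4.
rewrite -[_ + s *: _](_ : 1 - (- s) *: 'X^d = _); last by rewrite scaleNr opprK.
apply: cong_trans c4; apply: cong_sym.
rewrite -[X in cong _ _ X]mulr1; apply: cong_mul; first exact: cong_refl.
by move=> i id; rewrite coefB coefXn ltn_eqF // subr0.
Qed.
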